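(* Let $\Delta\ge 1$ be an integer, $c>0$, $n\ge 0$, and let $s_1,\dots,s_\Delta$ be nonnegative numbers with $s_1 \le s_2 \le \dots \le s_\Delta$ and $\sum_{i=1}^{\Delta} s_i = n$. Then the quantity $\sum_{i=1}^{\Delta} (\Delta + i)\, c\sqrt{s_i}$, over all such tuples, is minimized when $s_\Delta = n$ (and hence $s_1=\dots=s_{\Delta-1}=0$). *)

(* Defs.v *)
From HB Require Import structures.
From mathcomp Require Import all_boot all_order all_algebra.
Set Implicit Arguments. Unset Strict Implicit. Unset Printing Implicit Defensive.
Import Order.TTheory GRing.Theory Num.Theory.
Local Open Scope ring_scope.

Definition objective (R : rcfType) (D : nat) (c : R) (s : nat -> R) : R :=
  \sum_(1 <= i < D.+1) ((D + i)%:R * c * Num.sqrt (s i)).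

Definition extremal (R : rcfType) (D : nat) (n : R) : nat -> R :=
  fun i => if i == D then n else 0.

(* Main.v *)
Require Import Defs.
From HB Require Import structures.
From mathcomp Require Import all_boot all_order all_algebra.
From mathcomp Require Import ring lra.
Import Order.TTheory GRing.Theory Num.Theory.
Local Open Scope ring_scope.

Theorem mainTheorem2 (R : rcfType) (D : nat) (c n : R) (s : nat -> R)
  (hD : (1 <= D)%N) (hc : 0 < c) (hn : 0 <= n)
  (hs0 : forall i : nat, (1 <= i <= D)%N -> 0 <= s i)
  (hmono : forall i : nat, (1 <= i < D)%N -> s i <= s i.+1)
  (hsum : \sum_(1 <= i < D.+1) s i = n) :
  objective D c (extremal D n) <= objective D c s.
Proof.
have hle : forall i, (1 <= i <= D)%N -> s i <= s D.
  move=> i /andP[h1 h2].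
  have: forall j, (i + j <= D)%N -> s i <= s (i + j)%N.
    elim=> [|j IH] hj; first by rewrite addn0.
    have hj' : (i + j <= D)%N by rewrite addnS in hj; exact: ltnW.
    apply: le_trans (IH hj') _.
    rewrite addnS; apply: hmono.
    by rewrite -addnS hj (leq_trans h1 (leq_addr _ _)).
  by move=> /(_ (D - i)%N); rewrite subnKC // => ->.
set t := fun i => Num.sqrt (s i).
set M := t D.
set S := \sum_(1 <= i < D) t i.
have hM : 0 <= M by apply: sqrtr_ge0.
have hS : 0 <= S by apply: sumr_ge0 => i _; apply: sqrtr_ge0.
have ext : objective D c (extremal D n) = (D + D)%:R * c * Num.sqrt n.
  rewrite /objective big_nat_recr //= big_nat_cond big1 ?add0r; last first.
    by move=> i /andP[/andP[_ hi] _]; rewrite /extremal (ltn_eqF hi) sqrtr0 mulr0.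
  by rewrite /extremal eqxx.
have obj : (D%:R * c) * (S + 2 * M) <= objective D c s.
  rewrite /objective big_nat_recr //= mulrDr.
  apply: lerD.
    rewrite /S mulr_sumr; apply: ler_sum_nat => i /andP[h1 h2].
    rewrite /t; apply: ler_wpM2r; first exact: sqrtr_ge0.
    by apply: ler_wpM2r; [exact: ltW | rewrite ler_nat leq_addr].
  by rewrite natrD /M /t; rewrite le_eqVlt; apply/orP; left; apply/eqP; ring.
have hnb : n <= M * S + M ^+ 2.
  rewrite -hsum big_nat_recr //= /M /t sqr_sqrtr ?hs0 ?hD ?leqnn //.
  apply: lerD => //; rewrite /S mulr_sumr; apply: ler_sum_nat => i /andP[h1 h2].
  have h0 : 0 <= s i by apply: hs0; rewrite h1 ltnW.
  rewrite -{1}(sqr_sqrtr h0) expr2; apply: ler_wpM2r; first exact: sqrtr_ge0.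
  by rewrite ler_sqrt ?hs0 ?hD ?leqnn // hle // h1 ltnW.
rewrite ext; apply: le_trans obj.
have key : 2 * Num.sqrt n <= S + 2 * M.
  rewrite -ler_sqr ?nnegrE ?addr_ge0 ?mulr_ge0 ?sqrtr_ge0 //.
  rewrite exprMn sqr_sqrtr //.
  apply: (@le_trans _ _ (2 ^+ 2 * (M * S + M ^+ 2))).
    by apply: ler_wpM2l => //; rewrite exprn_ge0.
  rewrite -subr_ge0.
  have -> : (S + 2 * M) ^+ 2 - 2 ^+ 2 * (M * S + M ^+ 2) = S ^+ 2 by ring.
  exact: sqr_ge0.
have -> : (D + D)%:R * c * Num.sqrt n = D%:R * c * (2 * Num.sqrt n).
  by rewrite natrD; ring.
by apply: ler_wpM2l => //; rewrite mulr_ge0 // ltW.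
Qed.
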